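(* Let $p,q\geq2$ be relatively prime integers with $p\geq 2q-1$. Then $Z_{p/q}(X_{p,q})\neq\emptyset$, where $X_{p,q}=\bigcup_{a\in D_{p,q}}\left[\frac{a}{pq},\frac{a+1}{pq}\right)$.
   Context: For an integer $n>1$, $A_n=\{0,1,\dots,n-1\}$. For every $d\in A_q$ let $k_d\in A_p$ be the unique element with $k_dq\equiv d\pmod p$, and $D_{p,q}=\{a\in A_{pq}\mid a\equiv k_d\pmod p\text{ for some }d\in A_q\}$. For $x\in\mathbb{R}$, $\{x\}=x-\lfloor x\rfloor$; for $S\subseteq[0,1)$, $Z_{p/q}(S)=\{\xi>0\mid \{\xi(p/q)^i\}\in S\text{ for every }i\in\mathbb{N}\}$ with $\mathbb{N}=\{0,1,2,\dots\}$. *)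

(* Defs.v *)
From Stdlib Require Import Reals Arith.
Open Scope R_scope.

(* {x} = x - floor x ; Stdlib's frac_part x = x - IZR (Int_part x), Int_part = floor. *)
Definition frac (x : R) : R := frac_part x.

(* k is "k_d": the element of A_p with k*q = d (mod p).  (Unique when gcd p q = 1.) *)
Definition is_kd (p q d k : nat) : Prop := (k < p)%nat /\ (k * q) mod p = d mod p.

Definition inD (p q a : nat) : Prop :=
  (a < p * q)%nat /\ exists d k, (d < q)%nat /\ is_kd p q d k /\ a mod p = k mod p.

Definition inX (p q : nat) (x : R) : Prop :=
  exists a, inD p q a /\
    INR a / INR (p * q) <= x /\ x < (INR a + 1) / INR (p * q).

Definition Zpq (p q : nat) (S : R -> Prop) (xi : R) : Prop :=
  0 < xi /\ forall i : nat, S (frac (xi * (INR p / INR q) ^ i)).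

(* Main.v *)
Require Import Defs.
From Stdlib Require Import Reals Arith ZArith Lia Znumtheory Lra.

Definition step (p q : Z) (s : Z*Z) : Z*Z :=
 let (g,a) := s in
 let b := (p*a + q - 1)/q in
 let r := (-(p*g)) mod q in
 let j := (b/p - r) mod q in
 let c := b/p - j in
 ((p*g + c)/q, b mod p + j*p).

Lemma step_spec p q g a : 2 <= q -> 2*q - 1 <= p -> 0 <= a ->
  exists b c, p*c + snd (step p q (g,a)) = b /\ q * fst (step p q (g,a)) = p*g + c
   /\ 0 <= q*b - p*a <= q-1 /\ 0 <= snd (step p q (g,a)) < p*q
   /\ (snd (step p q (g,a)) mod p) * q mod p < q.
Proof.
  intros Hq Hp Ha. simpl.
  set (b := (p*a + q - 1)/q).
  set (r := (-(p*g)) mod q).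
  set (j := (b/p - r) mod q).
  exists b, (b/p - j).
  assert (Hb := Z.div_mod (p*a+q-1) q ltac:(lia)). fold b in Hb.
  assert (Hb2 := Z.mod_pos_bound (p*a+q-1) q ltac:(lia)).
  assert (Hbp := Z.div_mod b p ltac:(lia)).
  assert (Hbp2 := Z.mod_pos_bound b p ltac:(lia)).
  assert (Hj := Z.mod_pos_bound (b/p - r) q ltac:(lia)). fold j in Hj.
  assert (Hj2 := Z.div_mod (b/p - r) q ltac:(lia)). fold j in Hj2.
  assert (Hr := Z.div_mod (-(p*g)) q ltac:(lia)). fold r in Hr.
  assert (Hdiv : p*g + (b/p - j) = q * ((b/p - r)/q - (-(p*g))/q)) by lia.
  rewrite Hdiv. set (X := (b / p - r) / q - - (p * g) / q). rewrite (Z.mul_comm q X), Z.div_mul by lia.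
  split; [lia|]. split; [lia|]. split; [lia|]. split; [nia|].
  rewrite Z.mod_add by lia. rewrite Z.mod_mod by lia.
  rewrite Z.mul_mod_idemp_l by lia.
  assert (E : b*q = (q*b - p*a) + a*p) by ring. rewrite E, Z.mod_add by lia.
  rewrite Z.mod_small; lia.
Qed.
Close Scope Z_scope.
Open Scope Z_scope.
Lemma no_seq (p q : Z) : 2 <= q -> Z.gcd q p = 1 ->
  forall (N : nat) (A : nat -> Z), (Z.to_nat (A 0%nat) <= N)%nat -> (forall k, q * A (S k) = p * A k) ->
  (forall k, 0 < A k) -> False.
Proof.
  intros Hq Hg N. induction N as [|N IH]; intros A HN Hrec Hpos.
  - specialize (Hpos 0%nat). lia.
  - assert (Hd : forall k, (q | A k)).
    { intro k. apply Z.gauss with p; [|exact Hg]. exists (A (S k)). rewrite <- Hrec. ring. }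
    apply (IH (fun k => A k / q)).
    + destruct (Hd 0%nat) as [x Hx]. rewrite Hx, Z.div_mul by lia.
      specialize (Hpos 0%nat). nia.
    + intro k. destruct (Hd k) as [x Hx]. destruct (Hd (S k)) as [y Hy].
      rewrite Hx, Hy, !Z.div_mul by lia. specialize (Hrec k). rewrite Hx, Hy in Hrec. nia.
    + intro k. destruct (Hd k) as [x Hx]. rewrite Hx, Z.div_mul by lia. specialize (Hpos k). nia.
Qed.
Close Scope Z_scope.
Lemma gcd_nat_Z (p q : nat) : Nat.gcd p q = 1%nat -> Z.gcd (Z.of_nat q) (Z.of_nat p) = 1%Z.
Proof.
  intro H. apply Zgcd_1_rel_prime. constructor; try apply Z.divide_1_l.
  intros x [k Hk] [l Hl].
  assert (Hq : Nat.divide (Z.abs_nat x) q).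
  { exists (Z.abs_nat k). rewrite <- Zabs2Nat.inj_mul, <- Hk. lia. }
  assert (Hp : Nat.divide (Z.abs_nat x) p).
  { exists (Z.abs_nat l). rewrite <- Zabs2Nat.inj_mul, <- Hl. lia. }
  pose proof (Nat.gcd_greatest _ _ _ Hp Hq) as G. rewrite H in G.
  apply Nat.divide_1_r in G.
  assert (x = 1 \/ x = -1)%Z as [->| ->] by lia.
  - apply Z.divide_refl.
  - exists (-1)%Z. ring.
Qed.
Open Scope R_scope.
Lemma nested (rho : R) (u v : nat -> R) : 0 < rho ->
  (forall n, rho * u n <= u (S n)) -> (forall n, v (S n) <= rho * v n) ->
  (forall n, u n <= v n) ->
  exists l, forall n, u n <= l * rho ^ n <= v n.
Proof.
  intros Hr Hu Hv Huv.
  set (L := fun n => u n / rho ^ n).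
  set (Rr := fun n => v n / rho ^ n).
  assert (Hpow : forall n, 0 < rho ^ n) by (intro; apply pow_lt; lra).
  assert (HL : forall n, L n <= L (S n)).
  { intro n. unfold L. simpl. specialize (Hu n). specialize (Hpow n).
    apply (Rmult_le_reg_r (rho * rho ^ n)); [nra|].
    replace (u n / rho ^ n * (rho * rho ^ n)) with (rho * u n) by (field; lra).
    replace (u (S n) / (rho * rho ^ n) * (rho * rho ^ n)) with (u (S n)) by (field; lra). lra. }
  assert (HR : forall n, Rr (S n) <= Rr n).
  { intro n. unfold Rr. simpl. specialize (Hv n). specialize (Hpow n).
    apply (Rmult_le_reg_r (rho * rho ^ n)); [nra|].
    replace (v n / rho ^ n * (rho * rho ^ n)) with (rho * v n) by (field; lra).
    replace (v (S n) / (rho * rho ^ n) * (rho * rho ^ n)) with (v (S n)) by (field; lra). lra. }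
  assert (HLR : forall n, L n <= Rr n).
  { intro n. unfold L, Rr. unfold Rdiv. apply Rmult_le_compat_r; [left; apply Rinv_0_lt_compat, Hpow|apply Huv]. }
  assert (HRdec : forall n m, (n <= m)%nat -> Rr m <= Rr n).
  { intros n m Hnm. induction Hnm; [lra|]. specialize (HR m). lra. }
  assert (Hub : has_ub L).
  { exists (Rr 0%nat). intros x [n ->]. specialize (HRdec 0%nat n ltac:(lia)). specialize (HLR n). lra. }
  destruct (growing_cv L HL Hub) as [l Hl].
  exists l. intro n.
  assert (H1 : L n <= l) by (apply growing_ineq; auto).
  assert (H2 : l <= Rr n).
  { destruct (Rle_or_lt l (Rr n)) as [h|h]; [exact h|exfalso].
    destruct (Hl (l - Rr n) ltac:(lra)) as [N HN].
    specialize (HN (max N n) ltac:(lia)). unfold R_dist in HN.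
    specialize (HRdec n (max N n) ltac:(lia)). specialize (HLR (max N n)).
    apply Rabs_def2 in HN. lra. }
  unfold L, Rr in *. specialize (Hpow n). split.
  - apply (Rmult_le_reg_r (/ rho ^ n)); [apply Rinv_0_lt_compat; lra|].
    replace (l * rho ^ n * / rho ^ n) with l by (field; lra). exact H1.
  - apply (Rmult_le_reg_r (/ rho ^ n)); [apply Rinv_0_lt_compat; lra|].
    replace (l * rho ^ n * / rho ^ n) with l by (field; lra). exact H2.
Qed.

Lemma real_key (P Q g a g' a' b c : R) : 0 < P -> 0 < Q -> Q*g' = P*g + c -> P*c + a' = b ->
  0 <= Q*b - P*a -> Q*b - P*a <= P - Q ->
  (P/Q)*(g + a/(P*Q)) <= g' + a'/(P*Q) /\ g' + (a'+1)/(P*Q) <= (P/Q)*(g + (a+1)/(P*Q)).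
Proof.
  intros HP HQ H1 H2 H3 H4.
  assert (Eg : g' = (P*g + c)/Q) by (rewrite <- H1; field; lra).
  assert (Ea : a' = b - P*c) by lra.
  subst g' a'. split.
  - assert (E : (P*g + c)/Q + (b - P*c)/(P*Q) - (P/Q)*(g + a/(P*Q)) = (Q*b - P*a)/(P*Q*Q)) by (field; lra).
    assert (0 <= (Q*b - P*a)/(P*Q*Q)) by (unfold Rdiv; apply Rmult_le_pos; [lra| left; apply Rinv_0_lt_compat; apply Rmult_lt_0_compat; [apply Rmult_lt_0_compat|]; lra]).
    lra.
  - assert (E : (P/Q)*(g + (a+1)/(P*Q)) - ((P*g + c)/Q + (b - P*c + 1)/(P*Q)) = (P - Q - (Q*b - P*a))/(P*Q*Q)) by (field; lra).
    assert (0 <= (P - Q - (Q*b - P*a))/(P*Q*Q)) by (unfold Rdiv; apply Rmult_le_pos; [lra| left; apply Rinv_0_lt_compat; apply Rmult_lt_0_compat; [apply Rmult_lt_0_compat|]; lra]).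
    lra.
Qed.

Fixpoint st (p q : Z) (n : nat) : Z*Z :=
  match n with O => (1%Z, 0%Z) | S n => step p q (st p q n) end.

Theorem corollary2 (p q : nat) :
  (2 <= p)%nat -> (2 <= q)%nat -> Nat.gcd p q = 1%nat -> (2 * q - 1 <= p)%nat ->
  exists xi : R, Zpq p q (inX p q) xi.
Proof.
  intros Hp Hq Hg Hpq.
  set (pz := Z.of_nat p). set (qz := Z.of_nat q).
  assert (Hqz : (2 <= qz)%Z) by lia.
  assert (Hpz : (2*qz - 1 <= pz)%Z) by lia.
  set (G := fun n => fst (st pz qz n)). set (Aa := fun n => snd (st pz qz n)).
  assert (Hspec : forall n, (0 <= Aa n)%Z -> exists b c, (pz*c + Aa (S n) = b /\ qz * G (S n) = pz * G n + c
     /\ 0 <= qz*b - pz* Aa n <= qz-1 /\ 0 <= Aa (S n) < pz*qz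
     /\ (Aa (S n) mod pz) * qz mod pz < qz)%Z).
  { intros n H. unfold Aa, G in *. simpl. destruct (st pz qz n) as [g a]. simpl in H.
    apply step_spec; lia. }
  assert (Hinv0 : forall n, (0 <= Aa n < pz*qz)%Z).
  { induction n as [|n IH].
    - unfold Aa; simpl. lia.
    - destruct (Hspec n) as (b&c&_&_&_&h&_); lia. }
  assert (Hinv : forall n, ((Aa n mod pz)*qz mod pz < qz)%Z).
  { intro n. destruct n as [|n].
    - unfold Aa; simpl. rewrite Zmod_0_l. lia.
    - destruct (Hspec n) as (b&c&_&_&_&_&h); [apply Hinv0|exact h]. }
  set (P := IZR pz). set (Q := IZR qz).
  assert (HP : 0 < P) by (apply IZR_lt; lia).
  assert (HQ : 0 < Q) by (apply IZR_lt; lia).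
  set (u := fun n => IZR (G n) + IZR (Aa n) / (P*Q)).
  set (v := fun n => IZR (G n) + (IZR (Aa n) + 1) / (P*Q)).
  assert (Hrel : forall n, (P/Q) * u n <= u (S n) /\ v (S n) <= (P/Q) * v n).
  { intro n. destruct (Hspec n) as (b&c&h1&h2&h3&_); [apply Hinv0|].
    unfold u, v. apply (real_key P Q _ _ _ _ (IZR b) (IZR c)); auto.
    - unfold P, Q. rewrite <- !mult_IZR, <- plus_IZR. f_equal. exact h2.
    - unfold P. rewrite <- mult_IZR, <- plus_IZR. f_equal. exact h1.
    - unfold P, Q. rewrite <- !mult_IZR, <- minus_IZR. apply IZR_le. lia.
    - unfold P, Q. rewrite <- !mult_IZR, <- !minus_IZR. apply IZR_le. lia. }
  assert (Huv : forall n, u n <= v n).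
  { intro n. unfold u, v. assert (0 < P*Q) by (apply Rmult_lt_0_compat; lra).
    apply Rplus_le_compat_l. unfold Rdiv. apply Rmult_le_compat_r; [left; apply Rinv_0_lt_compat; lra|lra]. }
  destruct (nested (P/Q) u v) as [l Hl].
  { unfold Rdiv. apply Rmult_lt_0_compat; [lra|apply Rinv_0_lt_compat; lra]. }
  { intro n; apply Hrel. } { intro n; apply Hrel. } { exact Huv. }
  assert (Hl0 : 1 <= l).
  { destruct (Hl 0%nat) as [h _]. unfold u, G, Aa in h. simpl in h.
    replace (1 + 0 / (P*Q)) with 1 in h by (field; split; lra). lra. }
  set (Y := fun n => l * (P/Q)^n).
  assert (HY : forall n, 0 < Y n).
  { intro n. unfold Y. apply Rmult_lt_0_compat; [lra|apply pow_lt].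
    unfold Rdiv. apply Rmult_lt_0_compat; [lra|apply Rinv_0_lt_compat; lra]. }
  assert (HYS : forall n, Y (S n) = (P/Q) * Y n).
  { intro n. unfold Y. simpl. ring. }
  assert (Hstrict : forall n, Y n < v n).
  { intro n. destruct (Hl n) as [_ h]. fold (Y n) in h. destruct h as [h|h]; [exact h|exfalso].
    assert (Hall : forall k, Y (n + k)%nat = v (n + k)%nat).
    { induction k as [|k IH]; [rewrite Nat.add_0_r; exact h|].
      rewrite Nat.add_succ_r. destruct (Hl (S (n+k))) as [_ h2]. fold (Y (S (n+k))) in h2.
      destruct (Hrel (n+k)%nat) as [_ h3]. rewrite HYS in h2 |- *. rewrite IH in h2 |- *. lra. }
    set (A := fun k => (pz*qz*G (n+k)%nat + Aa (n+k)%nat + 1)%Z).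
    assert (HA : forall k, IZR (A k) = P*Q*Y (n+k)%nat).
    { intro k. rewrite Hall. unfold A, v, P, Q. rewrite !plus_IZR, !mult_IZR. field.
      split; fold P Q; lra. }
    apply (no_seq pz qz Hqz (gcd_nat_Z p q Hg) (Z.to_nat (A 0%nat)) A (le_n _)).
    - intro k. apply eq_IZR. rewrite !mult_IZR, !HA. fold P Q.
      rewrite Nat.add_succ_r, HYS. field. lra.
    - intro k. apply lt_IZR. rewrite HA. specialize (HY (n+k)%nat).
      apply Rmult_lt_0_compat; [apply Rmult_lt_0_compat|]; lra. }
  exists l. split; [lra|]. intro i.
  assert (Eratio : INR p / INR q = P/Q) by (unfold P, Q, pz, qz; rewrite !INR_IZR_INZ; reflexivity).
  rewrite Eratio. fold (Y i).
  destruct (Hl i) as [h1 _]. fold (Y i) in h1. specialize (Hstrict i).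
  specialize (Hinv0 i). specialize (Hinv i).
  assert (HPQ : 0 < P*Q) by (apply Rmult_lt_0_compat; lra).
  assert (Ha1 : (IZR (Aa i) + 1) / (P*Q) <= 1).
  { apply (Rmult_le_reg_r (P*Q)); [lra|]. unfold Rdiv. rewrite Rmult_assoc, Rinv_l, Rmult_1_r, Rmult_1_l by lra.
    unfold P, Q. rewrite <- mult_IZR, <- plus_IZR. apply IZR_le. lia. }
  assert (Ha0 : 0 <= IZR (Aa i) / (P*Q)).
  { unfold Rdiv. apply Rmult_le_pos; [apply IZR_le; lia|left; apply Rinv_0_lt_compat; lra]. }
  destruct (Int_part_frac_part_spec (Y i) (G i) (Y i - IZR (G i))) as [_ Hf].
  { unfold u, v in *. lra. } { ring. }
  unfold frac. rewrite <- Hf.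
  exists (Z.to_nat (Aa i)). split; [split|].
  - lia.
  - exists (Z.to_nat ((Aa i mod pz) * qz mod pz)), (Z.to_nat (Aa i mod pz)).
    assert (Hm := Z.mod_pos_bound (Aa i) pz ltac:(lia)).
    assert (Hm2 := Z.mod_pos_bound ((Aa i mod pz) * qz) pz ltac:(lia)).
    split; [lia|]. split; [split; [lia|]|].
    + apply Nat2Z.inj. rewrite !Nat2Z.inj_mod, Nat2Z.inj_mul, !Z2Nat.id by lia.
      fold pz qz. rewrite Z.mod_mod by lia. reflexivity.
    + apply Nat2Z.inj. rewrite !Nat2Z.inj_mod, !Z2Nat.id by lia.
      fold pz. rewrite Z.mod_mod by lia. reflexivity.
  - rewrite mult_INR, !INR_IZR_INZ, Z2Nat.id by lia. fold pz qz P Q.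
    unfold u, v in *. split; lra.
Qed.
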